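(* Let $R$ be a binary relation on a set $A$. Then every $x\in A$ is sequentially strongly minimalizing if and only if both $\mathbf{RP}(R)$ and $\mathbf{BP}(R)$ hold. (Constructively.)
   Context: Work in constructive (intuitionistic) logic / Martin-Löf type theory without excluded middle or other axioms. Let $R$ be a binary relation on $A$; write $a\to b$ for $R\,a\,b$ and $\to^*$ for its reflexive–transitive closure. $a\in\mathrm{MF}$ ($a$ is a minimal form) iff for all $b$, $a\to^* b$ implies $b\to^* a$. A sequence $s:\mathbb{N}\to A$ is $R$-increasing if $s(k)\to s(k+1)$ for all $k$; it is bounded if there is $b$ with $s(i)\to^* b$ for all $i$. $x$ is sequentially strongly minimalizing if for every $R$-increasing sequence $s$ with $s(0)=x$ there is $i$ with $s(i)\in\mathrm{MF}$. $\mathbf{BP}(R)$: every $R$-increasing sequence is bounded. $\mathbf{RP}(R)$: for every bounded $R$-increasing sequence $s$ there is $i$ such that for all $x$, $s(i)\to^* x$ implies $x\to^* s(i)$. *)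

(* Defs.v *)
From Stdlib Require Import Relations.Relation_Operators.

Section Defs.
Variables (A : Type) (R : A -> A -> Prop).

Definition rstar : A -> A -> Prop := clos_refl_trans A R.

Definition MF (a : A) : Prop := forall b, rstar a b -> rstar b a.

Definition increasing (s : nat -> A) : Prop := forall k, R (s k) (s (S k)).

Definition bounded (s : nat -> A) : Prop := exists b, forall i, rstar (s i) b.

Definition seq_strongly_minimalizing (x : A) : Prop :=
  forall s : nat -> A, increasing s -> s 0 = x -> exists i, MF (s i).

Definition BP : Prop := forall s : nat -> A, increasing s -> bounded s.

Definition RP : Prop :=
  forall s : nat -> A, increasing s -> bounded s ->
    exists i, forall x, rstar (s i) x -> rstar x (s i).
End Defs.

Arguments rstar {A} R _ _.
Arguments MF {A} R _.
Arguments increasing {A} R _.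
Arguments bounded {A} R _.
Arguments seq_strongly_minimalizing {A} R _.
Arguments BP {A} R.
Arguments RP {A} R.

(* Main.v *)
Require Import Defs.
From Stdlib Require Import Relations.Relation_Operators Arith Lia.

Lemma chain_rstar (A : Type) (R : A -> A -> Prop) (s : nat -> A) :
  increasing R s -> forall i k, rstar R (s i) (s (i + k)).
Proof.
  intros Hs i k. induction k as [|k IH].
  - rewrite Nat.add_0_r. apply rt_refl.
  - eapply rt_trans. exact IH. rewrite Nat.add_succ_r. apply rt_step. apply Hs.
Qed.

Theorem mainTheorem7 (A : Type) (R : A -> A -> Prop) :
  (forall x : A, seq_strongly_minimalizing R x) <-> (RP R /\ BP R).
Proof.
  split.
  - intros H. split.
    + intros s Hs _. destruct (H (s 0) s Hs eq_refl) as [i Hi]. exists i. exact Hi.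
    + intros s Hs. destruct (H (s 0) s Hs eq_refl) as [i Hi]. exists (s i).
      intros j. destruct (le_lt_dec j i) as [Hle|Hlt].
      * replace i with (j + (i - j)) by lia. apply chain_rstar; exact Hs.
      * apply Hi. replace j with (i + (j - i)) by lia. apply chain_rstar; exact Hs.
  - intros [HRP HBP] x s Hs _. exact (HRP s Hs (HBP s Hs)).
Qed.
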